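(* For every domino tiling system $\mathcal{D}=(\mathrm{Col},\mathrm{T},\mathrm{white})$ there exists an $\mathcal{ALCO}^{r\#s\#}_{\mathsf{reg}}$-concept $C^{\mathcal{D}}_{\mathrm{snake}}$, using only the role name $r$, the individual names $\mathsf{ld},\mathsf{rd},\mathsf{lu},\mathsf{ru}$ and the concept names $C_t$ ($t\in\mathrm{T}$), such that for every interpretation $\mathcal{I}$: $\mathcal{I}$ is a $\mathcal{D}$-pseudosnake if and only if $(C^{\mathcal{D}}_{\mathrm{snake}})^{\mathcal{I}}\neq\emptyset$.
   Context: $\mathcal{ALCO}^{r\#s\#}_{\mathsf{reg}}$: concepts built from $\top$, concept names, nominals $\{a\}$ ($\{a\}^{\mathcal{I}}=\{a^{\mathcal{I}}\}$), $\neg$, $\sqcap$, $\exists p.C$ for role names $p$, and $\exists\mathcal{L}.C$ where $\mathcal{L}$ is either a regular language over role names and tests $A?$, or the language $\{r^ns^n\mid n\in\mathbb{N}\}$ for fixed role names $r$ (call) and $s$ (return); $(\exists\mathcal{L}.C)^{\mathcal{I}}$ is the set of elements from which there is a path reading a word of $\mathcal{L}$ (role letters follow edges, tests $A?$ stay in place at an element of $A^{\mathcal{I}}$) ending in $C^{\mathcal{I}}$. A domino tiling system is $\mathcal{D}=(\mathrm{Col},\mathrm{T},\mathrm{white})$ with $\mathrm{T}\subseteq\mathrm{Col}^4$ of tiles $(c_l,c_d,c_r,c_u)$ (throughout, no tile has more than two white sides). A tile is left-/down-/right-/up-border if $c_l$/$c_d$/$c_r$/$c_u$ is white; $t,t'$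 are H-compatible if $c_r=c'_l$. An element carries $t$ if it lies in $C_t^{\mathcal{I}}$; the named elements are $\mathsf{ld}^{\mathcal{I}},\mathsf{rd}^{\mathcal{I}},\mathsf{lu}^{\mathcal{I}},\mathsf{ru}^{\mathcal{I}}$. $\mathcal{I}$ is a $\mathcal{D}$-pseudosnake if: (SPath) there is an $r^+$-path starting at $\mathsf{ld}^{\mathcal{I}}$, later passing $\mathsf{rd}^{\mathcal{I}}$, later $\mathsf{lu}^{\mathcal{I}}$, ending at $\mathsf{ru}^{\mathcal{I}}$; (SNoLoop) no named element $r^+$-reaches itself; (SUniqTil) every element $r^*$-reachable from $\mathsf{ld}^{\mathcal{I}}$ carries exactly one tile; (SSpecTil) the named elements are exactly the elements $r^*$-reachable from $\mathsf{ld}^{\mathcal{I}}$ carrying a tile with two white sides, and $\mathsf{ld}^{\mathcal{I}},\mathsf{rd}^{\mathcal{I}},\mathsf{lu}^{\mathcal{I}},\mathsf{ru}^{\mathcal{I}}$ carry respectively a left-and-down-border, right-and-down-border, left-and-up-border, right-and-up-border tile; (SHori) every element $d\neq\mathsf{ru}^{\mathcal{I}}$ $r^*$-reachable from $\mathsf{ld}^{\mathcal{I}}$ carrying $t=(c_l,c_d,c_r,c_u)$ has a tile $t'=(c'_l,c'_d,c'_r,c'_u)$ carried by all its $r$-successors with (i) $t,t'$ H-compatible, (ii) if $c_d$ is white then ($c_r$ not white iff $c'_d$ white), (iii) if $c_u$ white then $c'_u$ white. *)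

(* Defs.v *)
From mathcomp Require Import all_boot.
From Stdlib Require Import Relations.

Set Implicit Arguments.
Unset Strict Implicit.
Unset Printing Implicit Defensive.

Inductive letter (CN RN : Type) : Type :=
| LRole of RN
| LTest of CN.

Inductive regex (CN RN : Type) : Type :=
| RVoid
| REps
| RLet of letter CN RN
| RCat of regex CN RN & regex CN RN
| RAlt of regex CN RN & regex CN RN
| RStar of regex CN RN.

Inductive matches (CN RN : Type) : regex CN RN -> seq (letter CN RN) -> Prop :=
| m_eps : matches (REps CN RN) [::]
| m_let l : matches (RLet l) [:: l]
| m_cat e1 e2 w1 w2 : matches e1 w1 -> matches e2 w2 -> matches (RCat e1 e2) (w1 ++ w2)
| m_altl e1 e2 w : matches e1 w -> matches (RAlt e1 e2) w
| m_altr e1 e2 w : matches e2 w -> matches (RAlt e1 e2) w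
| m_star0 e : matches (RStar e) [::]
| m_starS e w1 w2 : matches e w1 -> matches (RStar e) w2 -> matches (RStar e) (w1 ++ w2).

(* the languages allowed in existential restrictions: a regular language,
   or the non-regular language { r^n s^n | n } for the fixed roles r, s *)
Inductive lang (CN RN : Type) : Type :=
| LReg of regex CN RN
| LNest.

Definition in_lang (CN RN : Type) (r s : RN) (L : lang CN RN)
  (w : seq (letter CN RN)) : Prop :=
  match L with
  | LReg e => matches e w
  | LNest => exists n, w = nseq n (LRole CN r) ++ nseq n (LRole CN s)
  end.

Inductive concept (CN RN IN : Type) : Type :=
| CTop
| CName of CN
| CNom of IN
| CNeg of concept CN RN IN
| CAnd of concept CN RN IN & concept CN RN IN
| CExRole of RN & concept CN RN IN
| CExLang of lang CN RN & concept CN RN IN.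

Record interp (CN RN IN : Type) (D : Type) : Type := Interp {
  cI : CN -> D -> Prop;
  rI : RN -> D -> D -> Prop;
  iI : IN -> D
}.

Fixpoint reads (CN RN IN D : Type) (I : interp CN RN IN D)
  (w : seq (letter CN RN)) (x y : D) : Prop :=
  match w with
  | [::] => x = y
  | LRole p :: w' => exists z, rI I p x z /\ reads I w' z y
  | LTest A :: w' => cI I A x /\ reads I w' x y
  end.

Fixpoint sem (CN RN IN D : Type) (r s : RN) (I : interp CN RN IN D)
  (C : concept CN RN IN) (x : D) : Prop :=
  match C with
  | CTop => True
  | CName A => cI I A x
  | CNom a => x = iI I a
  | CNeg C1 => ~ sem r s I C1 x
  | CAnd C1 C2 => sem r s I C1 x /\ sem r s I C2 x
  | CExRole p C1 => exists y, rI I p x y /\ sem r s I C1 y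
  | CExLang L C1 => exists w y, in_lang r s L w /\ reads I w x y /\ sem r s I C1 y
  end.

Definition letter_ok (CN RN : Type) (PC : CN -> Prop) (PR : RN -> Prop)
  (l : letter CN RN) : Prop :=
  match l with LRole p => PR p | LTest A => PC A end.

Fixpoint regex_ok (CN RN : Type) (PC : CN -> Prop) (PR : RN -> Prop)
  (e : regex CN RN) : Prop :=
  match e with
  | RVoid | REps => True
  | RLet l => letter_ok PC PR l
  | RCat e1 e2 | RAlt e1 e2 => regex_ok PC PR e1 /\ regex_ok PC PR e2
  | RStar e1 => regex_ok PC PR e1
  end.

Definition lang_ok (CN RN : Type) (r s : RN) (PC : CN -> Prop) (PR : RN -> Prop)
  (L : lang CN RN) : Prop :=
  match L with LReg e => regex_ok PC PR e | LNest => PR r /\ PR s end.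

Fixpoint uses_only (CN RN IN : Type) (r s : RN) (PC : CN -> Prop)
  (PR : RN -> Prop) (PI : IN -> Prop) (C : concept CN RN IN) : Prop :=
  match C with
  | CTop => True
  | CName A => PC A
  | CNom a => PI a
  | CNeg C1 => uses_only r s PC PR PI C1
  | CAnd C1 C2 => uses_only r s PC PR PI C1 /\ uses_only r s PC PR PI C2
  | CExRole p C1 => PR p /\ uses_only r s PC PR PI C1
  | CExLang L C1 => lang_ok r s PC PR L /\ uses_only r s PC PR PI C1
  end.

Notation tile Col := (Col * Col * Col * Col)%type.

Section Tiles.
Variable Col : eqType.
Definition c_l (t : tile Col) : Col := t.1.1.1.
Definition c_d (t : tile Col) : Col := t.1.1.2.
Definition c_r (t : tile Col) : Col := t.1.2.
Definition c_u (t : tile Col) : Col := t.2.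

Definition nwhite (white : Col) (t : tile Col) : nat :=
  (c_l t == white) + (c_d t == white) + (c_r t == white) + (c_u t == white).

Definition H_compatible (t t' : tile Col) : Prop := c_r t = c_l t'.
End Tiles.

Section Snake.
Variables (Col : finType) (T : {set tile Col}) (white : Col).
Variables (CN RN IN : Type) (r : RN) (Ct : tile Col -> CN) (ld rd lu ru : IN).
Variables (D : Type) (I : interp CN RN IN D).

Let R := rI I r.
Let ldI := iI I ld.
Let rdI := iI I rd.
Let luI := iI I lu.
Let ruI := iI I ru.

Definition reachable (d : D) : Prop := clos_refl_trans D R ldI d.
Definition carries (t : tile Col) (d : D) : Prop := cI I (Ct t) d.
Definition named (d : D) : Prop := d = ldI \/ d = rdI \/ d = luI \/ d = ruI.

Definition SPath : Prop :=
  clos_trans D R ldI rdI /\ clos_trans D R rdI luI /\ clos_trans D R luI ruI.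

Definition SNoLoop : Prop :=
  forall d, named d -> ~ clos_trans D R d d.

Definition SUniqTil : Prop :=
  forall d, reachable d ->
    exists t, [/\ t \in T, carries t d &
                  forall t', t' \in T -> carries t' d -> t' = t].

Definition SSpecTil : Prop :=
  (forall d, named d <->
     (reachable d /\ exists t, [/\ t \in T, carries t d & nwhite white t = 2]))
  /\ (exists t, [/\ t \in T, carries t ldI, c_l t = white & c_d t = white])
  /\ (exists t, [/\ t \in T, carries t rdI, c_r t = white & c_d t = white])
  /\ (exists t, [/\ t \in T, carries t luI, c_l t = white & c_u t = white])
  /\ (exists t, [/\ t \in T, carries t ruI, c_r t = white & c_u t = white]).

Definition SHori : Prop :=
  forall d, reachable d -> d <> ruI ->
  forall t, t \in T -> carries t d ->
    exists t', [/\ t' \in T,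
      (forall e, R d e -> carries t' e),
      H_compatible t t',
      (c_d t = white -> (c_r t <> white <-> c_d t' = white)) &
      (c_u t = white -> c_u t' = white)].

Definition pseudosnake : Prop :=
  [/\ SPath, SNoLoop, SUniqTil, SSpecTil & SHori].
End Snake.

(* Main.v *)
From Stdlib Require Import Relations Classical.
Require Import Defs.
From mathcomp Require Import all_boot.

Set Implicit Arguments.
Unset Strict Implicit.
Unset Printing Implicit Defensive.

Definition cOr CN RN IN (C1 C2 : concept CN RN IN) := CNeg (CAnd (CNeg C1) (CNeg C2)).
Definition cImp CN RN IN (C1 C2 : concept CN RN IN) := CNeg (CAnd C1 (CNeg C2)).
Definition tOr CN RN IN (A : Type) (s : seq A) (f : A -> concept CN RN IN) :=
  foldr (fun a acc => cOr (f a) acc) (CNeg (@CTop CN RN IN)) s.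
Definition tAnd CN RN IN (A : Type) (s : seq A) (f : A -> concept CN RN IN) :=
  foldr (fun a acc => CAnd (f a) acc) (@CTop CN RN IN) s.
Definition rstar CN RN (r : RN) : lang CN RN := LReg (RStar (RLet (LRole CN r))).
Definition rplus CN RN (r : RN) : lang CN RN :=
  LReg (RCat (RLet (LRole CN r)) (RStar (RLet (LRole CN r)))).
Definition cAllR CN RN IN (p : RN) (C : concept CN RN IN) := CNeg (CExRole p (CNeg C)).
Definition cAllStar CN RN IN (p : RN) (C : concept CN RN IN) :=
  CNeg (CExLang (rstar CN p) (CNeg C)).

Section L.
Context (CN RN IN D : Type) (r s : RN) (I : interp CN RN IN D).

Lemma sem_or C1 C2 x : sem r s I (cOr C1 C2) x <-> sem r s I C1 x \/ sem r s I C2 x.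
Proof. simpl; split; [move=> H; apply: NNPP; tauto | tauto]. Qed.

Lemma sem_imp C1 C2 x : sem r s I (cImp C1 C2) x <-> (sem r s I C1 x -> sem r s I C2 x).
Proof. simpl; split; [move=> H H1; apply: NNPP; tauto | tauto]. Qed.

Lemma sem_tOr (A : eqType) (l : seq A) f x :
  sem r s I (tOr l f) x <-> exists2 a, a \in l & sem r s I (f a) x.
Proof.
elim: l => [|a l IH]; first by simpl; split => [[]|[]//]; auto.
change (sem r s I (cOr (f a) (tOr l f)) x <-> exists2 b, b \in a :: l & sem r s I (f b) x).
rewrite sem_or IH; split.
- case=> [H|[b Hb H]]; first by exists a; rewrite ?inE ?eqxx.
  by exists b; rewrite // inE Hb orbT.
- case=> b; rewrite inE => /orP[/eqP->|Hb] H; [by left|right; by exists b].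
Qed.

Lemma sem_tAnd (A : eqType) (l : seq A) f x :
  sem r s I (tAnd l f) x <-> forall a, a \in l -> sem r s I (f a) x.
Proof.
elim: l => [|a l IH] /=; first by split.
rewrite IH; split.
- by case=> H1 H2 b; rewrite inE => /orP[/eqP->|]; auto.
- move=> H; split; [apply: H; by rewrite inE eqxx | move=> b Hb; apply: H; by rewrite inE Hb orbT].
Qed.

Lemma sem_allR p C x : sem r s I (cAllR p C) x <-> forall y, rI I p x y -> sem r s I C y.
Proof.
simpl; split.
- move=> H y Hy; apply: NNPP => Hn; apply: H; by exists y.
- move=> H [y [Hy Hn]]; exact: Hn (H y Hy).
Qed.

Lemma reads_cat w1 w2 x y :
  reads I (w1 ++ w2) x y <-> exists z, reads I w1 x z /\ reads I w2 z y.
Proof.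
elim: w1 x => [|[p|A] w1 IH] x /=.
- split; [by exists x | by case=> z [->]].
- split.
  + case=> z [Hz /IH [u [H1 H2]]]; exists u; split=> //; by exists z.
  + case=> u [[z [Hz H1]] H2]; exists z; split=> //; apply/IH; by exists u.
- split.
  + case=> HA /IH [u [H1 H2]]; by exists u.
  + case=> u [[HA H1] H2]; split=> //; apply/IH; by exists u.
Qed.

Lemma star_sound w : matches (RStar (RLet (LRole CN r))) w ->
  forall x y, reads I w x y -> clos_refl_trans D (rI I r) x y.
Proof.
move Ee: (RStar (RLet (LRole CN r))) => e H.
elim: H Ee => // {e w}.
- move=> e _ x y /= ->; exact: rt_refl.
- move=> e w1 w2 H1 _ H2 IH2 [] Ee x y; subst e.
  inversion H1; subst => /=. idtac.
  case=> z [Hz Hr].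
  apply: rt_trans (rt_step _ _ _ _ Hz) _; exact: IH2.
Qed.

Lemma star_complete x y : clos_refl_trans D (rI I r) x y ->
  exists w, matches (RStar (RLet (LRole CN r))) w /\ reads I w x y.
Proof.
move=> H0; have H := clos_rt_rt1n _ _ _ _ H0; clear H0; elim: H => [z|a b c Hab _ [w [Hw Hr]]].
- exists [::]; split=> //; exact: m_star0.
- exists ([:: LRole CN r] ++ w); split; first by apply: m_starS => //; exact: m_let.
  by exists b.
Qed.

Lemma sem_star C x : sem r s I (CExLang (rstar CN r) C) x <->
  exists y, clos_refl_trans D (rI I r) x y /\ sem r s I C y.
Proof.
simpl; split.
- case=> w [y [Hw [Hr HC]]]; exists y; split=> //; exact: star_sound Hw _ _ Hr.
- case=> y [/star_complete [w [Hw Hr]] HC]; by exists w, y.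
Qed.

Lemma sem_plus C x : sem r s I (CExLang (rplus CN r) C) x <->
  exists y, clos_trans D (rI I r) x y /\ sem r s I C y.
Proof.
simpl; split.
- case=> w [y [Hw [Hr HC]]]; exists y; split=> //.
  inversion Hw; subst. inversion H1; subst.
  move: Hr => /= [z [Hz Hr]].
  have := star_sound H3 Hr => Hzy.
  apply: clos_rt_t (rt_refl _ _ _) _.
  apply/clos_trans_t1n_iff.
  have {Hzy} := clos_rt_rt1n _ _ _ _ Hzy. clear Hr HC.
  move=> H; move: x Hz; elim: H.
  + by move=> z0 x0 Hz0; apply: t1n_step.
  + move=> a b c Hab _ IH x0 Hxa.
    apply: Relation_Operators.t1n_trans Hxa _; exact: IH.
- case=> y [Hxy0 HC]. have Hxy := clos_trans_t1n _ _ _ _ Hxy0.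
  have [z [Hz Hzy]] : exists z, rI I r x z /\ clos_refl_trans D (rI I r) z y.
    case: Hxy => [b Hb|a b Ha Hb]; first by exists b; split=> //; exact: rt_refl.
    exists a; split=> //; apply: clos_t_clos_rt; exact: clos_t1n_trans _ _ _ _ Hb.
  case: (star_complete Hzy) => w [Hw Hr].
  exists ([:: LRole CN r] ++ w), y; split; last by split=> //; exists z.
  apply: m_cat => //; exact: m_let.
Qed.

Lemma sem_allstar C x : sem r s I (cAllStar r C) x <->
  forall y, clos_refl_trans D (rI I r) x y -> sem r s I C y.
Proof.
rewrite /cAllStar /=.
split.
- move=> H y Hy; apply: NNPP => Hn; apply: H; apply/(sem_star (CNeg C)); by exists y.
- move=> H /(sem_star (CNeg C)) [y [Hy Hn]]; exact: Hn (H y Hy).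
Qed.
End L.

Lemma uo_tOr CN RN IN (r s : RN) PC PR PI (A : eqType) (l : seq A) (f : A -> concept CN RN IN) :
  (forall a, a \in l -> uses_only r s PC PR PI (f a)) -> uses_only r s PC PR PI (tOr l f).
Proof.
elim: l => [|a l IH] H /=; first by [].
split; [apply: H; by rewrite inE eqxx|].
apply: IH => b Hb; apply: H; by rewrite inE Hb orbT.
Qed.

Lemma uo_tAnd CN RN IN (r s : RN) PC PR PI (A : eqType) (l : seq A) (f : A -> concept CN RN IN) :
  (forall a, a \in l -> uses_only r s PC PR PI (f a)) -> uses_only r s PC PR PI (tAnd l f).
Proof.
elim: l => [|a l IH] H /=; first by [].
split; [apply: H; by rewrite inE eqxx|].
apply: IH => b Hb; apply: H; by rewrite inE Hb orbT.
Qed.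

Definition goodb (Col : eqType) (white : Col) (t t' : tile Col) : bool :=
  [&& c_r t == c_l t', (c_d t == white) ==> ((c_r t != white) == (c_d t' == white))
    & (c_u t == white) ==> (c_u t' == white)].

Section C.
Context (Col : finType) (T : {set tile Col}) (white : Col)
  (CN RN IN : Type) (r : RN) (Ct : tile Col -> CN) (ld rd lu ru : IN).

Definition cT (t : tile Col) : concept CN RN IN := @CName CN RN IN (Ct t).
Definition namedC : concept CN RN IN :=
  cOr (@CNom CN RN IN ld) (cOr (@CNom CN RN IN rd) (cOr (@CNom CN RN IN lu) (@CNom CN RN IN ru))).
Definition uniqC : concept CN RN IN :=
  CAnd (tOr (enum T) cT) (tAnd (enum T) (fun t => tAnd (enum T) (fun t' =>
    if t == t' then @CTop CN RN IN else CNeg (CAnd (cT t) (cT t'))))).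
Definition tile2C := tOr [seq t <- enum T | nwhite white t == 2] cT.
Definition horiC := cImp (CNeg (@CNom CN RN IN ru)) (tAnd (enum T) (fun t =>
  cImp (cT t) (tOr [seq t' <- enum T | goodb white t t'] (fun t' => cAllR r (cT t'))))).
Definition localC := CAnd uniqC (CAnd (cImp tile2C namedC) horiC).
Definition pathC : concept CN RN IN :=
  CExLang (rplus CN r) (CAnd (@CNom CN RN IN rd) (CExLang (rplus CN r)
    (CAnd (@CNom CN RN IN lu) (CExLang (rplus CN r) (@CNom CN RN IN ru))))).
Definition noloopC (a : IN) : concept CN RN IN :=
  CNeg (CExLang (rstar CN r) (CAnd (@CNom CN RN IN a) (CExLang (rplus CN r) (@CNom CN RN IN a)))).
Definition specC (a : IN) (P : pred (tile Col)) : concept CN RN IN :=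
  CExLang (rstar CN r) (CAnd (@CNom CN RN IN a) (tOr [seq t <- enum T | P t] cT)).
Definition Pld (t : tile Col) := (c_l t == white) && (c_d t == white).
Definition Prd (t : tile Col) := (c_r t == white) && (c_d t == white).
Definition Plu (t : tile Col) := (c_l t == white) && (c_u t == white).
Definition Pru (t : tile Col) := (c_r t == white) && (c_u t == white).
Definition snakeC : concept CN RN IN :=
  CAnd (@CNom CN RN IN ld) (CAnd pathC (CAnd
    (CAnd (noloopC ld) (CAnd (noloopC rd) (CAnd (noloopC lu) (noloopC ru))))
    (CAnd (CAnd (specC ld Pld) (CAnd (specC rd Prd) (CAnd (specC lu Plu) (specC ru Pru))))
      (cAllStar r localC)))).
End C.

Lemma snakeC_uo (Col : finType) (T : {set tile Col}) (white : Col)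
  (CN RN IN : Type) (r s : RN) (Ct : tile Col -> CN) (ld rd lu ru : IN) :
    uses_only r s (fun A => exists2 t, t \in T & A = Ct t) (fun p => p = r)
      (fun a => a = ld \/ a = rd \/ a = lu \/ a = ru)
      (snakeC T white r Ct ld rd lu ru).
Proof.
have hT : forall (P : pred (tile Col)) t, t \in [seq t <- enum T | P t] -> exists2 t', t' \in T & Ct t = Ct t'.
  by move=> P t; rewrite mem_filter mem_enum => /andP[_ Ht]; exists t.
have hT' : forall t, t \in enum T -> exists2 t', t' \in T & Ct t = Ct t'.
  by move=> t; rewrite mem_enum => Ht; exists t.
rewrite /snakeC /=.
do ! (try split); try tauto.
all: try (apply: uo_tOr => t Ht /=; first [exact: hT Ht | exact: hT' Ht]).
all: try (apply: uo_tOr => t Ht /=; split=> //; first [exact: hT Ht | exact: hT' Ht]).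
all: try (apply: uo_tAnd => t Ht /=).
all: try (apply: uo_tAnd => t' Ht' /=).
- by case: (t == t') => //=; split; [exact: hT' Ht|exact: hT' Ht'].
- split; first exact: hT' Ht.
  apply: uo_tOr => u Hu /=; split=> //; exact: hT Hu.
Qed.

Section S.
Context (Col : finType) (T : {set tile Col}) (white : Col)
  (CN RN IN : Type) (r s : RN) (Ct : tile Col -> CN) (ld rd lu ru : IN)
  (D : Type) (I : interp CN RN IN D).

Local Notation sm := (sem r s I).
Local Notation cr t y := (cI I (Ct t) y).

Lemma sem_and (a b : concept CN RN IN) y : sm (CAnd a b) y <-> sm a y /\ sm b y.
Proof. by []. Qed.

Lemma sem_filt (P : pred (tile Col)) y :
  sm (tOr [seq t <- enum T | P t] (cT RN IN Ct)) y <->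
  exists t, [/\ t \in T, P t & cr t y].
Proof.
rewrite sem_tOr; split.
- case=> t; rewrite mem_filter mem_enum => /andP[H1 H2] H3; by exists t.
- case=> t [H1 H2 H3]; exists t => //; by rewrite mem_filter mem_enum H1 H2.
Qed.

Lemma sem_uniq y : sm (uniqC T RN IN Ct) y <->
  (exists2 t, t \in T & cr t y) /\
  (forall t t', t \in T -> t' \in T -> cr t y -> cr t' y -> t = t').
Proof.
rewrite /uniqC sem_and.
rewrite sem_tOr sem_tAnd.
split.
- move=> [[t Ht H] H2]; rewrite mem_enum in Ht; split; first exact: (ex_intro2 _ _ t Ht H).
  move=> a b Ha Hb Hca Hcb.
  have Ha' : a \in enum T by rewrite mem_enum.
  have Hb' : b \in enum T by rewrite mem_enum.
  move: (H2 a Ha') => /sem_tAnd /(_ b Hb').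
  case: (a =P b) => [E _|_ /= Hn]; first exact: E.
  exfalso; exact: Hn (conj Hca Hcb).
- move=> [[t Ht H] H2]; split.
    have Ht' : t \in enum T by rewrite mem_enum.
    exact: (ex_intro2 _ _ t Ht' H).
  move=> a Ha; apply/sem_tAnd => b Hb.
  rewrite mem_enum in Ha; rewrite mem_enum in Hb.
  case: (a =P b) => [_|Hab] /=; first exact: Logic.I.
  move=> [Hca Hcb]; apply: Hab; exact: H2 Ha Hb Hca Hcb.
Qed.
Lemma sem_hori y : sm (horiC T white r Ct ru) y <->
  (y <> iI I ru -> forall t, t \in T -> cr t y ->
     exists t', [/\ t' \in T, goodb white t t' & forall e, rI I r y e -> cr t' e]).
Proof.
rewrite /horiC sem_imp.
split => H Hy.
- move=> t Ht Hc.
  have Ht' : t \in enum T by rewrite mem_enum.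
  move: (H Hy) => /sem_tAnd /(_ t Ht') /sem_imp /(_ Hc).
  move=> /sem_tOr [t' Ht'' /sem_allR Ha]; exists t'.
  rewrite mem_filter mem_enum in Ht''; case/andP: Ht'' => Hg Ht2.
  split; [exact: Ht2 | exact: Hg | exact: Ha].
- apply/sem_tAnd => t Ht; rewrite mem_enum in Ht; apply/sem_imp => Hc.
  case: (H Hy t Ht Hc) => t' [Ht' Hg Ha]; apply/sem_tOr.
  have Hm : t' \in [seq t'0 <- enum T | goodb white t t'0] by rewrite mem_filter mem_enum Hg Ht'.
  exists t'; first exact: Hm.
  by apply/sem_allR.
Qed.

Lemma sem_named y : sm (namedC CN RN ld rd lu ru) y <->
  (y = iI I ld \/ y = iI I rd \/ y = iI I lu \/ y = iI I ru).
Proof. by rewrite /namedC !sem_or. Qed.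

Lemma sem_neg (C : concept CN RN IN) y : sm (CNeg C) y <-> ~ sm C y.
Proof. by []. Qed.

Lemma ge2 (a b c d : bool) : (a && b) || (c && b) || (a && d) || (c && d) ->
  2 <= a + b + c + d.
Proof. by case: a; case: b; case: c; case: d. Qed.

Lemma main_iff (HT : forall t, t \in T -> nwhite white t <= 2) :
  pseudosnake T white r Ct ld rd lu ru I <->
  exists x : D, sm (snakeC T white r Ct ld rd lu ru) x.
Proof.
have nw2 : forall t, t \in T -> (c_l t == white) && (c_d t == white) || (c_r t == white) && (c_d t == white)
   || (c_l t == white) && (c_u t == white) || (c_r t == white) && (c_u t == white) ->
   nwhite white t = 2.
  move=> t Ht H; apply/eqP; rewrite eqn_leq (HT t Ht) /nwhite; exact: ge2 H.
split.
- case=> [[P1 [P2 P3]] NL UT [Named2 [Sld [Srd [Slu Sru]]]] SH].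
  have rrd : clos_refl_trans D (rI I r) (iI I ld) (iI I rd) := clos_t_clos_rt _ _ _ _ P1.
  have rlu : clos_refl_trans D (rI I r) (iI I ld) (iI I lu) :=
    rt_trans _ _ _ _ _ rrd (clos_t_clos_rt _ _ _ _ P2).
  have rru : clos_refl_trans D (rI I r) (iI I ld) (iI I ru) :=
    rt_trans _ _ _ _ _ rlu (clos_t_clos_rt _ _ _ _ P3).
  have rld : clos_refl_trans D (rI I r) (iI I ld) (iI I ld) := rt_refl _ _ _.
  exists (iI I ld); split; first reflexivity.
  split.
    apply/sem_plus; exists (iI I rd); split; first exact: P1.
    split; first reflexivity.
    apply/sem_plus; exists (iI I lu); split; first exact: P2.
    split; first reflexivity.
    apply/sem_plus; exists (iI I ru); split; first exact: P3.
    reflexivity.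
  have noloop : forall a, (iI I a = iI I ld \/ iI I a = iI I rd \/ iI I a = iI I lu \/ iI I a = iI I ru) ->
      sm (noloopC CN r a) (iI I ld).
    move=> a Ha; rewrite /noloopC sem_neg => /sem_star [y [_ /sem_and [Ey /sem_plus [z [Hc Ez]]]]].
    rewrite Ey Ez in Hc; exact: NL _ Ha Hc.
  split.
    split; first (apply: noloop; tauto).
    split; first (apply: noloop; tauto).
    split; first (apply: noloop; tauto).
    apply: noloop; tauto.
  split.
    split.
      apply/sem_star; exists (iI I ld); split; first exact: rld.
      split; first reflexivity.
      apply/sem_filt; case: Sld => t [Ht Hc H1 H2]; exists t; split; [exact: Ht| |exact: Hc].
      by rewrite /Pld H1 H2 eqxx.
    split.
      apply/sem_star; exists (iI I rd); split; first exact: rrd.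
      split; first reflexivity.
      apply/sem_filt; case: Srd => t [Ht Hc H1 H2]; exists t; split; [exact: Ht| |exact: Hc].
      by rewrite /Prd H1 H2 eqxx.
    split.
      apply/sem_star; exists (iI I lu); split; first exact: rlu.
      split; first reflexivity.
      apply/sem_filt; case: Slu => t [Ht Hc H1 H2]; exists t; split; [exact: Ht| |exact: Hc].
      by rewrite /Plu H1 H2 eqxx.
    apply/sem_star; exists (iI I ru); split; first exact: rru.
    split; first reflexivity.
    apply/sem_filt; case: Sru => t [Ht Hc H1 H2]; exists t; split; [exact: Ht| |exact: Hc].
    by rewrite /Pru H1 H2 eqxx.
  apply/sem_allstar => y Hy.
  rewrite /localC; apply/sem_and; split.
    apply/sem_uniq; case: (UT y Hy) => t [Ht Hc Hu]; split.
      exact: (ex_intro2 _ _ t Ht Hc).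
    move=> a b Ha Hb Hca Hcb; rewrite (Hu a Ha Hca) (Hu b Hb Hcb); reflexivity.
  apply/sem_and; split.
    apply/sem_imp => /sem_filt [t [Ht H2 Hc]]; apply/sem_named.
    apply/(Named2 y); split; first exact: Hy.
    exists t; split; [exact: Ht|exact: Hc|exact: (eqP H2)].
  apply/sem_hori => Hne t Ht Hc.
  case: (SH y Hy Hne t Ht Hc) => t' [Ht' Ha Hcomp Hd Hu]; exists t'; split; [exact: Ht'| |exact: Ha].
  rewrite /goodb; apply/and3P; split.
  + apply/eqP; exact: Hcomp.
  + apply/implyP => /eqP Hdw; apply/eqP; move: (Hd Hdw) => [h1 h2].
    case: (c_r t =P white) => Hr; case: (c_d t' =P white) => Hd' /=.
    * exfalso; exact: (h2 Hd') Hr.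
    * reflexivity.
    * reflexivity.
    * exfalso; exact: Hd' (h1 Hr).
  + apply/implyP => /eqP Huw; apply/eqP; exact: Hu Huw.
- case=> x; rewrite /snakeC => /sem_and [Hx /sem_and [Hpath /sem_and [NLs /sem_and [Ss /sem_allstar Hall]]]].
  move: NLs => /sem_and [NL1 /sem_and [NL2 /sem_and [NL3 NL4]]].
  move: Ss => /sem_and [S1 /sem_and [S2 /sem_and [S3 S4]]].
  move: Hx => /= Hx; subst x.
  move/sem_plus: Hpath => [y1 [P1 /sem_and [Ey1 /sem_plus [y2 [P2 /sem_and [Ey2 /sem_plus [y3 [P3 Ey3]]]]]]]].
  move: Ey1 Ey2 Ey3 => /= Ey1 Ey2 Ey3; subst y1 y2 y3.
  have rrd : clos_refl_trans D (rI I r) (iI I ld) (iI I rd) := clos_t_clos_rt _ _ _ _ P1.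
  have rlu : clos_refl_trans D (rI I r) (iI I ld) (iI I lu) :=
    rt_trans _ _ _ _ _ rrd (clos_t_clos_rt _ _ _ _ P2).
  have rru : clos_refl_trans D (rI I r) (iI I ld) (iI I ru) :=
    rt_trans _ _ _ _ _ rlu (clos_t_clos_rt _ _ _ _ P3).
  have rld : clos_refl_trans D (rI I r) (iI I ld) (iI I ld) := rt_refl _ _ _.
  have noloop : forall a, clos_refl_trans D (rI I r) (iI I ld) (iI I a) ->
      sm (noloopC CN r a) (iI I ld) -> ~ clos_trans D (rI I r) (iI I a) (iI I a).
    move=> a Ha NL Hc; move: NL; rewrite /noloopC sem_neg; apply; apply/sem_star; exists (iI I a); split; first exact: Ha.
    split; first reflexivity.
    apply/sem_plus; exists (iI I a); split; [exact: Hc|reflexivity].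
  have spec : forall a (P : pred (tile Col)), sm (specC T r Ct a P) (iI I ld) ->
      exists t, [/\ t \in T, P t & cr t (iI I a)].
    by move=> a P /sem_star [y [_ /sem_and [-> /sem_filt H]]].
  split.
  + split; [exact: P1|split; [exact: P2|exact: P3]].
  + move=> d [->|[->|[->|->]]]; apply: noloop; eassumption.
  + move=> d Hd; move: (Hall d Hd); rewrite /localC => /sem_and [/sem_uniq [[t Ht Hc] Hu] _].
    exists t; split; [exact: Ht|exact: Hc|].
    move=> t' Ht' Hc'; exact: Hu t' t Ht' Ht Hc' Hc.
  + split.
      move=> d; split.
        move=> Hn; split.
          case: Hn => [->|[->|[->|->]]]; assumption.
        case: Hn => [->|[->|[->|->]]].
        * case: (spec _ _ S1) => t [Ht HP Hc]; exists t; split; [exact: Ht|exact: Hc|].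
          apply: nw2 Ht _; rewrite /Pld /Prd /Plu /Pru in HP; by rewrite HP.
        * case: (spec _ _ S2) => t [Ht HP Hc]; exists t; split; [exact: Ht|exact: Hc|].
          apply: nw2 Ht _; rewrite /Pld /Prd /Plu /Pru in HP; by rewrite HP orbT.
        * case: (spec _ _ S3) => t [Ht HP Hc]; exists t; split; [exact: Ht|exact: Hc|].
          apply: nw2 Ht _; rewrite /Pld /Prd /Plu /Pru in HP; by rewrite HP !orbT.
        * case: (spec _ _ S4) => t [Ht HP Hc]; exists t; split; [exact: Ht|exact: Hc|].
          apply: nw2 Ht _; rewrite /Pld /Prd /Plu /Pru in HP; by rewrite HP !orbT.
      move=> [Hd [t [Ht Hc H2]]].
      move: (Hall d Hd); rewrite /localC => /sem_and [_ /sem_and [/sem_imp Himp _]].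
      apply/sem_named; apply: Himp; apply/sem_filt; exists t; split; [exact: Ht| |exact: Hc].
      by rewrite H2.
    split.
      case: (spec _ _ S1) => t [Ht /andP [/eqP h1 /eqP h2] Hc]; exists t; split; [exact: Ht|exact: Hc|exact: h1|exact: h2].
    split.
      case: (spec _ _ S2) => t [Ht /andP [/eqP h1 /eqP h2] Hc]; exists t; split; [exact: Ht|exact: Hc|exact: h1|exact: h2].
    split.
      case: (spec _ _ S3) => t [Ht /andP [/eqP h1 /eqP h2] Hc]; exists t; split; [exact: Ht|exact: Hc|exact: h1|exact: h2].
    case: (spec _ _ S4) => t [Ht /andP [/eqP h1 /eqP h2] Hc]; exists t; split; [exact: Ht|exact: Hc|exact: h1|exact: h2].
  + move=> d Hd Hne t Ht Hc.
    move: (Hall d Hd); rewrite /localC => /sem_and [_ /sem_and [_ /sem_hori H]].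
    case: (H Hne t Ht Hc) => t' [Ht' Hg Ha]; exists t'.
    move/and3P: Hg => [/eqP h1 /implyP h2 /implyP h3].
    split; [exact: Ht'|exact: Ha|exact: h1| |].
    * move=> Hdw; move: (h2 (introT eqP Hdw)) => /eqP E.
      split=> H'.
        move: E; rewrite (introF eqP H') /= => /esym /eqP E'; exact: E'.
      move=> Hr; move: E; rewrite Hr H' !eqxx; discriminate.
    * move=> Huw; apply/eqP; apply: h3; apply/eqP; exact: Huw.
Qed.

End S.

Theorem lemma4p5
  (Col : finType) (T : {set tile Col}) (white : Col)
  (HT : forall t, t \in T -> nwhite white t <= 2)
  (CN RN IN : Type) (r s : RN) (Hrs : r <> s)
  (Ct : tile Col -> CN) (HCt : {in T &, injective Ct})
  (ld rd lu ru : IN)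
  (Hld_rd : ld <> rd) (Hld_lu : ld <> lu) (Hld_ru : ld <> ru)
  (Hrd_lu : rd <> lu) (Hrd_ru : rd <> ru) (Hlu_ru : lu <> ru) :
  exists C : concept CN RN IN,
    uses_only r s (fun A => exists2 t, t \in T & A = Ct t) (fun p => p = r)
      (fun a => a = ld \/ a = rd \/ a = lu \/ a = ru) C /\
    forall (D : Type) (I : interp CN RN IN D),
      pseudosnake T white r Ct ld rd lu ru I <-> exists x : D, sem r s I C x.
Proof.
exists (snakeC T white r Ct ld rd lu ru); split.
  exact: snakeC_uo.
move=> D I; exact: main_iff.
Qed.
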